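(* Let $T\in\mathbb{R}^{d\times d\times d}$ have nonnegative entries, let $C^{(1)}_{1},\ldots,C^{(1)}_{d}$ and $C^{(2)}_{1},\ldots,C^{(2)}_{d}$ be $r\times r$ real symmetric positive definite matrices, fix $i_3\in[d]$, and let $\mathcal{A}:\mathbb{S}^r\to\mathbb{R}^{d^2}$ be $X\mapsto(\langle X,C^{(1)}_{i_1}\circ C^{(2)}_{i_2}\rangle)_{i_1,i_2\in[d]}$. Let $t=\operatorname{vec}(T_{::i_3})=(T_{i_1i_2i_3})_{i_1,i_2}$. Then $\mathcal{A}^\top t=\sum_{i_1,i_2}T_{i_1i_2i_3}C^{(1)}_{i_1}\circ C^{(2)}_{i_2}$ is positive semidefinite, and for every positive definite $C_{\mathrm{old}}$ the update $C_{\mathrm{new}}=W(\mathcal{A}^\top t)W$, $W=([\mathcal{A}^\top\mathcal{A}](C_{\mathrm{old}}))^{-1}\#C_{\mathrm{old}}$, yields a positive semidefinite matrix satisfying $\|t-\mathcal{A}(C_{\mathrm{new}})\|_2^2\le\|t-\mathcal{A}(C_{\mathrm{old}})\|_2^2$.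
   Context: $\circ$ denotes the Schur (entrywise) product of matrices, $\langle Y,Z\rangle=\operatorname{tr}(YZ)$ on the space $\mathbb{S}^r$ of $r\times r$ real symmetric matrices. The adjoint is $\mathcal{A}^\top(y)=\sum_{i_1,i_2}y_{i_1i_2}C^{(1)}_{i_1}\circ C^{(2)}_{i_2}$ and $[\mathcal{A}^\top\mathcal{A}](Z)=\mathcal{A}^\top(\mathcal{A}(Z))$. For positive definite $C,D$, $C\# D=C^{1/2}(C^{-1/2}DC^{-1/2})^{1/2}C^{1/2}$ is the matrix geometric mean. *)

(* Defs.v *)
From HB Require Import structures.
From mathcomp Require Import all_boot all_order all_algebra.
From mathcomp Require Import reals.
From Stdlib Require Import ClassicalEpsilon.
Set Implicit Arguments. Unset Strict Implicit. Unset Printing Implicit Defensive.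
Import Order.TTheory GRing.Theory Num.Theory.
Local Open Scope ring_scope.

Section Defs.
Variable R : realType.

Definition psdmx (n : nat) (A : 'M[R]_n) : Prop :=
  A^T = A /\ forall v : 'cV[R]_n, 0 <= (v^T *m A *m v) 0 0.

Definition pdmx (n : nat) (A : 'M[R]_n) : Prop :=
  A^T = A /\ forall v : 'cV[R]_n, v != 0 -> 0 < (v^T *m A *m v) 0 0.

Definition schur (n : nat) (A B : 'M[R]_n) : 'M[R]_n :=
  \matrix_(i, j) (A i j * B i j).

Definition inner (n : nat) (Y Z : 'M[R]_n) : R := \tr (Y *m Z).

Definition sqrtmx (n : nat) (A : 'M[R]_n) : 'M[R]_n :=
  epsilon (inhabits 0) (fun B : 'M[R]_n => psdmx B /\ B *m B = A).

Definition geomean (n : nat) (C D : 'M[R]_n) : 'M[R]_n :=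
  let Ch := sqrtmx C in
  let Cih := invmx Ch in
  Ch *m sqrtmx (Cih *m D *m Cih) *m Ch.

Definition Aop (d r : nat) (C1 C2 : 'I_d -> 'M[R]_r) (X : 'M[R]_r) : 'M[R]_d :=
  \matrix_(i1, i2) inner X (schur (C1 i1) (C2 i2)).

Definition Aadj (d r : nat) (C1 C2 : 'I_d -> 'M[R]_r) (y : 'M[R]_d) : 'M[R]_r :=
  \sum_(i1 < d) \sum_(i2 < d) y i1 i2 *: schur (C1 i1) (C2 i2).

(* squared Euclidean norm of a vector in R^{d^2} *)
Definition sqnorm2 (d : nat) (y : 'M[R]_d) : R :=
  \sum_(i1 < d) \sum_(i2 < d) y i1 i2 ^+ 2.

End Defs.

(* Main.v *)
Require Import Defs.
From HB Require Import structures.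
From mathcomp Require Import all_boot all_order all_algebra.
From mathcomp Require Import reals.
From mathcomp Require Import complex.
From Stdlib Require Import ClassicalEpsilon.
From mathcomp.algebra_tactics Require Import ring lra.
Set Implicit Arguments. Unset Strict Implicit. Unset Printing Implicit Defensive.
Import Order.TTheory GRing.Theory Num.Theory.
Local Open Scope ring_scope.



Lemma interp (F : fieldType) (s : seq F) (g : F -> F) :
  exists p : {poly F}, forall x, x \in s -> p.[x] = g x.
Proof.
elim: s => [|a s [p Hp]]; first by exists 0.
have [as_|as_] := boolP (a \in s).
  by exists p => x; rewrite inE => /orP[/eqP->|]; [exact: Hp|exact: Hp].
pose q := \prod_(b <- s) ('X - b%:P).
have qa : q.[a] != 0.
  rewrite /q horner_prod prodf_seq_neq0; apply/allP => b bs /=.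
  by rewrite hornerXsubC subr_eq0; apply: contra as_ => /eqP->.
exists (p + ((g a - p.[a]) / q.[a]) *: q) => x; rewrite inE => /orP[/eqP->|xs].
  by rewrite hornerD hornerZ mulfVK // addrC subrK.
have qx : q.[x] = 0.
  by rewrite /q horner_prod (big_rem x xs) /= hornerXsubC subrr mul0r.
by rewrite hornerD hornerZ qx mulr0 addr0 Hp.
Qed.

Section Spec.
Variable R : realType.
Local Notation C := (R[i]).
Local Notation f := (real_complex R).

Lemma spec_real n (A : 'M[R]_n.+1) : A^T = A ->
  exists lam : 'I_n.+1 -> R, (forall i, eigenvalue A (lam i)) /\
    forall q : {poly R}, (forall i, q.[lam i] = 0) -> horner_mx A q = 0.
Proof.
move=> Asym.
pose Ac : 'M[C]_n.+1 := map_mx f A.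
have Aherm : Ac \is hermsymmx.
  apply: realsym_hermsym.
    by apply/is_hermitianmxP; rewrite expr0 scale1r map_mx_id // /Ac map_trmx Asym.
  by apply/mxOverP => i j; rewrite mxE; apply/complex_realP; exists (A i j).
have AE := orthomx_spectralP (hermitian_normalmx Aherm).
set U := spectralmx Ac in AE; set D := spectral_diag Ac in AE.
have Ureal := hermitian_spectral_diag_real Aherm.
pose lam i : R := complex.Re (D 0 i).
have Dl i : D 0 i = ((lam i)%:C)%C.
  by rewrite /lam RRe_real //; apply: (mxOverP Ureal).
have Uu : U \in unitmx := spectral_unit Ac.
exists lam; split.
  move=> i; rewrite eigenvalue_root_char -(fmorph_root f) map_char_poly.
  rewrite -eigenvalue_root_char; apply/eigenvalueP; exists (row i U).
    rewrite -/Ac {1}AE -row_mul !mulmxA mulmxV // mul1mx.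
    by rewrite row_mul row_diag_mx -scalemxAl -rowE Dl.
  apply/negP => /eqP H.
  have : row i U *m invmx U = 0 by rewrite H mul0mx.
  rewrite rowE mulmxK // => /matrixP /(_ 0 i); rewrite !mxE !eqxx /=.
  by move/eqP; rewrite oner_eq0.
move=> q Hq; apply: (@map_mx_inj _ _ f).
rewrite map_horner_mx -/Ac AE horner_mx_uconjC // horner_mx_diag.
have -> : map_mx (horner (map_poly f q)) D = 0.
  by apply/rowP => j; rewrite !mxE Dl horner_map /= Hq.
have -> : diag_mx (0 : 'rV[C]_n.+1) = 0.
  by apply/matrixP => a b; rewrite !mxE mul0rn.
by rewrite mulmx0 mul0mx map_mx0.
Qed.


Lemma cV_sq (n : nat) (w : 'cV[R]_n) : (w^T *m w) 0 0 = \sum_i w i 0 ^+ 2.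
Proof. by rewrite mxE; apply: eq_bigr => i _; rewrite mxE expr2. Qed.

Lemma cV_sq_ge0 (n : nat) (w : 'cV[R]_n) : 0 <= (w^T *m w) 0 0.
Proof. by rewrite cV_sq sumr_ge0 // => i _; rewrite sqr_ge0. Qed.

Lemma cV_sq_gt0 (n : nat) (w : 'cV[R]_n) : w != 0 -> 0 < (w^T *m w) 0 0.
Proof.
move=> wn0; rewrite lt_def cV_sq_ge0 andbT cV_sq psumr_eq0 => [|i _]; last first.
  exact: sqr_ge0.
apply: contra wn0 => /allP H; apply/eqP/matrixP => i j; rewrite (ord1 j) mxE.
by have /(_ (mem_index_enum i)) /= := H i; rewrite sqrf_eq0 => /eqP.
Qed.

Lemma eig_pos (n : nat) (A : 'M[R]_n) a : pdmx A -> eigenvalue A a -> 0 < a.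
Proof.
move=> [_ Apd] /eigenvalueP [v Hv vn0].
have wn0 : v^T != 0 by apply: contra vn0 => /eqP/(congr1 trmx); rewrite trmxK trmx0 => ->.
have := Apd _ wn0; rewrite trmxK Hv -scalemxAl mxE.
have := cV_sq_gt0 wn0; rewrite trmxK => H.
by rewrite pmulr_lgt0.
Qed.

Lemma horner_tr (n : nat) (A : 'M[R]_n.+1) (p : {poly R}) :
  (horner_mx A p)^T = horner_mx A^T p.
Proof.
elim/poly_ind: p => [|p c IH]; first by rewrite !rmorph0 trmx0.
rewrite !(rmorphD, rmorphM) /= !(horner_mx_X, horner_mx_C) linearD /= tr_scalar_mx.
rewrite -!mulmxE trmx_mul IH; congr (_ + _).
by apply: comm_mx_horner; rewrite /comm_mx.
Qed.

Lemma sqrt_pd (n : nat) (A : 'M[R]_n) : pdmx A -> exists B, pdmx B /\ B *m B = A.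
Proof.
case: n A => [|n] A Apd.
  by exists A; split => //; rewrite !flatmx0.
have [lam [lamE lamZ]] := spec_real Apd.1.
have lpos i : 0 < lam i := eig_pos Apd (lamE i).
have [q Hq] := interp [seq lam i | i <- enum 'I_n.+1] (fun x => Num.sqrt (Num.sqrt x)).
pose Q := horner_mx A q.
have QT : Q^T = Q by rewrite horner_tr Apd.1.
have Q4 : Q *m Q *m (Q *m Q) = A.
  apply/eqP; rewrite -subr_eq0; apply/eqP.
  have -> : Q *m Q *m (Q *m Q) - A = horner_mx A (q ^+ 4 - 'X).
    by rewrite rmorphB rmorphXn /= horner_mx_X (exprD _ 2 2) expr2 -!mulmxE.
  apply: lamZ => i; rewrite hornerD hornerN hornerX horner_exp Hq; last first.
    by apply/mapP; exists i => //; rewrite mem_enum.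
  have l0 := ltW (lpos i).
  by rewrite (exprM _ 2 2) sqr_sqrtr ?sqrtr_ge0 // sqr_sqrtr // subrr.
exists (Q *m Q); split => //; split; first by rewrite trmx_mul QT.
move=> v vn0.
have Qv : Q *m v != 0.
  apply: contra vn0 => /eqP Qv0.
  have : A *m v = 0 by rewrite -Q4 !mulmxA -!(mulmxA _ _ v) Qv0 !mulmx0.
  move=> Av; apply/negPn/negP => vn1; have := Apd.2 _ vn1; by rewrite -mulmxA Av mulmx0 mxE ltxx.
have := cV_sq_gt0 Qv; by rewrite trmx_mul QT !mulmxA.
Qed.


Lemma cs0 (a b c : R) : 0 <= c ->
  (forall s, 0 <= a + s * b *+ 2 + s ^+ 2 * c) -> b ^+ 2 <= a * c.
Proof.
move=> c0 H; have [cz|cp] := eqVneq c 0.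
  have [bz|bnz] := eqVneq b 0; first by rewrite bz cz expr0n mulr0.
  have := H (- (a + 1) / (b *+ 2)); rewrite cz mulr0 addr0.
  have -> : - (a + 1) / (b *+ 2) * b *+ 2 = - (a + 1).
    by field.
  lra.
have cpos : 0 < c by rewrite lt_def cp c0.
have := H (- b / c).
have -> : a + - b / c * b *+ 2 + (- b / c) ^+ 2 * c = (a * c - b ^+ 2) / c by field.
by rewrite pmulr_lge0 ?invr_gt0 // subr_ge0.
Qed.

Lemma pd_psd n (A : 'M[R]_n) : pdmx A -> psdmx A.
Proof.
move=> [As Ap]; split => // v; have [->|vn0] := eqVneq v 0.
  by rewrite mulmx0 mxE.
exact/ltW/Ap.
Qed.

Lemma qf_sym n (S : 'M[R]_n) (u w : 'cV[R]_n) : S^T = S ->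
  (u^T *m S *m w) 0 0 = (w^T *m S *m u) 0 0.
Proof.
move=> Ss; transitivity ((u^T *m S *m w)^T 0 0); first by rewrite [RHS]mxE.
by rewrite !trmx_mul trmxK Ss mulmxA.
Qed.

Lemma psd_kill n (S : 'M[R]_n) (v : 'cV[R]_n) : psdmx S -> (v^T *m S *m v) 0 0 = 0 -> S *m v = 0.
Proof.
move=> [Ss Sp] H0; pose x := S *m v.
have key : forall s : R, 0 <= (v^T *m S *m v) 0 0 + s * (x^T *m S *m v) 0 0 *+ 2
    + s ^+ 2 * (x^T *m S *m x) 0 0.
  move=> s; have := Sp (v + s *: x).
  have E : (v + s *: x)^T = v^T + s *: x^T by rewrite linearD linearZ.
  rewrite E !(mulmxDl, mulmxDr) -!scalemxAl -!scalemxAr.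
  have h3 := qf_sym v x Ss; move: h3.
  move: (v^T *m S *m x) (x^T *m S *m v) (v^T *m S *m v) (x^T *m S *m x).
  move=> A3 A2 A1 A4 h3; rewrite !mxE h3.
  by move=> h; apply: le_trans h _; rewrite le_eqVlt; apply/orP; left; apply/eqP; ring.
have := cs0 (Sp x) key; rewrite H0 mul0r.
have -> : (x^T *m S *m v) 0 0 = (x^T *m x) 0 0 by rewrite -mulmxA.
move=> h; have : (x^T *m x) 0 0 = 0.
  by apply/eqP; rewrite -sqrf_eq0 eq_le h sqr_ge0.
by move/eqP; apply: contraTeq => /cV_sq_gt0; rewrite lt_def => /andP[].
Qed.

Lemma pd_unit n (A : 'M[R]_n) : pdmx A -> A \in unitmx.
Proof.
move=> [As Ap]; rewrite unitmxE unitfE; apply/negP => /det0P [v vn0 vA].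
have wn0 : v^T != 0 by apply: contra vn0 => /eqP/(congr1 trmx); rewrite trmxK trmx0 => ->.
have := Ap _ wn0; rewrite trmxK -mulmxA -As -trmx_mul vA trmx0 mulmx0 mxE ltxx //.
Qed.

Lemma psd_unit_pd n (S : 'M[R]_n) : psdmx S -> S \in unitmx -> pdmx S.
Proof.
move=> Sp Su; split; first exact: Sp.1.
move=> v vn0; rewrite lt_def Sp.2 andbT; apply/negP => /eqP H.
have := psd_kill Sp H => /(congr1 (mulmx (invmx S))); rewrite mulKmx // mulmx0.
by move/eqP; rewrite (negPf vn0).
Qed.

Lemma tr_sym n (M : 'M[R]_n) : M^T = M -> M \in unitmx -> (invmx M)^T = invmx M.
Proof. by move=> Ms _; rewrite trmx_inv Ms. Qed.

Lemma cong_psd n (P M : 'M[R]_n) : psdmx P -> M^T = M -> psdmx (M *m P *m M).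
Proof.
move=> [Ps Pp] Ms; split; first by rewrite !trmx_mul Ps Ms mulmxA.
move=> v; have := Pp (M *m v); by rewrite trmx_mul Ms !mulmxA.
Qed.

Lemma cong_pd n (P M : 'M[R]_n) : pdmx P -> M^T = M -> M \in unitmx ->
  pdmx (M *m P *m M).
Proof.
move=> [Ps Pp] Ms Mu; split; first by rewrite !trmx_mul Ps Ms mulmxA.
move=> v vn0; have : M *m v != 0.
  apply: contra vn0 => /eqP H; apply/eqP.
  by have := congr1 (mulmx (invmx M)) H; rewrite mulKmx // mulmx0.
move/Pp; by rewrite trmx_mul Ms !mulmxA.
Qed.

Lemma pd_inv n (A : 'M[R]_n) : pdmx A -> pdmx (invmx A).
Proof.
move=> Ap; have Au := pd_unit Ap.
have Is : (invmx A)^T = invmx A by rewrite trmx_inv Ap.1.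
have := cong_pd Ap Is; rewrite unitmx_inv => /(_ Au).
by rewrite mulVmx // mul1mx.
Qed.

Lemma psd0 n : psdmx (0 : 'M[R]_n).
Proof. by split; [rewrite trmx0 | move=> v; rewrite mulmx0 mul0mx mxE]. Qed.

Lemma psdD n (A B : 'M[R]_n) : psdmx A -> psdmx B -> psdmx (A + B).
Proof.
move=> [As Ap] [Bs Bp]; split; first by rewrite linearD /= As Bs.
by move=> v; rewrite mulmxDr mulmxDl mxE addr_ge0.
Qed.

Lemma psdZ n (A : 'M[R]_n) a : 0 <= a -> psdmx A -> psdmx (a *: A).
Proof.
move=> a0 [As Ap]; split; first by rewrite linearZ /= As.
by move=> v; rewrite -scalemxAr -scalemxAl mxE mulr_ge0.
Qed.

Lemma pdD n (A B : 'M[R]_n) : pdmx A -> psdmx B -> pdmx (A + B).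
Proof.
move=> [As Ap] [Bs Bp]; split; first by rewrite linearD /= As Bs.
by move=> v vn0; rewrite mulmxDr mulmxDl mxE; apply: ltr_pwDl; [exact: Ap | exact: Bp].
Qed.

Lemma pdZ n (A : 'M[R]_n) a : 0 < a -> pdmx A -> pdmx (a *: A).
Proof.
move=> a0 [As Ap]; split; first by rewrite linearZ /= As.
by move=> v vn0; rewrite -scalemxAr -scalemxAl mxE mulr_gt0 // Ap.
Qed.

Lemma psd_sum n (I : finType) (P : pred I) (F : I -> 'M[R]_n) :
  (forall i, P i -> psdmx (F i)) -> psdmx (\sum_(i | P i) F i).
Proof.
move=> H; apply: (big_ind (@psdmx R n)) => //; [exact: psd0 | exact: psdD].
Qed.

Lemma sqrtmx_spec n (A : 'M[R]_n) : pdmx A ->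
  psdmx (sqrtmx A) /\ sqrtmx A *m sqrtmx A = A.
Proof.
move=> Ap; rewrite /sqrtmx; apply: (@epsilon_spec _ (inhabits (0 : 'M[R]_n)) (fun B => psdmx B /\ B *m B = A)).
by have [B [Bp BB]] := sqrt_pd Ap; exists B; split => //; exact: pd_psd.
Qed.

Lemma qf_delta n (M : 'M[R]_n) (i : 'I_n) :
  ((delta_mx i 0 : 'cV[R]_n)^T *m M *m (delta_mx i 0 : 'cV[R]_n)) 0 0 = M i i.
Proof. by rewrite trmx_delta -rowE -colE !mxE. Qed.

Lemma tr_psd_pd n (P B : 'M[R]_n) : psdmx P -> pdmx B -> 0 <= \tr (P *m B).
Proof.
move=> [Ps Pp] Bp; have [L [Lp LL]] := sqrt_pd Bp.
rewrite -LL mulmxA mxtrace_mulC mulmxA /mxtrace sumr_ge0 // => i _.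
  have := Pp (L *m delta_mx i 0); by rewrite trmx_mul Lp.1 -(qf_delta (L *m P *m L)) !mulmxA.
Qed.

Lemma unit_mulv_neq0 n (L : 'M[R]_n) (v : 'cV[R]_n) : L \in unitmx -> v != 0 ->
  L *m v != 0.
Proof.
move=> Lu; apply: contra => /eqP H; apply/eqP.
by have := congr1 (mulmx (invmx L)) H; rewrite mulKmx // mulmx0.
Qed.

Lemma delta_neq0 n (i : 'I_n) : (delta_mx i 0 : 'cV[R]_n) != 0.
Proof.
by apply/negP => /eqP/matrixP/(_ i 0); rewrite !mxE !eqxx /= => /eqP; rewrite oner_eq0.
Qed.

Lemma tr_pd_pd n (P B : 'M[R]_n.+1) : pdmx P -> pdmx B -> 0 < \tr (P *m B).
Proof.
move=> [Ps Pp] Bp; have [L [Lp LL]] := sqrt_pd Bp.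
rewrite -LL mulmxA mxtrace_mulC mulmxA /mxtrace (bigD1 ord0) //=.
have Lu := pd_unit Lp.
apply: ltr_pwDl.
  have := Pp _ (unit_mulv_neq0 Lu (delta_neq0 ord0)).
  by rewrite trmx_mul Lp.1 -(qf_delta (L *m P *m L)) !mulmxA.
rewrite sumr_ge0 // => i _.
have := ltW (Pp _ (unit_mulv_neq0 Lu (delta_neq0 i))).
by rewrite trmx_mul Lp.1 -(qf_delta (L *m P *m L)) !mulmxA.
Qed.

Lemma qfE n (A : 'M[R]_n) (v : 'cV[R]_n) :
  (v^T *m A *m v) 0 0 = \sum_i \sum_j v i 0 * A i j * v j 0.
Proof.
rewrite mxE exchange_big /=; apply: eq_bigr => j _; rewrite mxE mulr_suml.
by apply: eq_bigr => i _; rewrite !mxE.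
Qed.

Lemma cV_neq0 n (v : 'cV[R]_n) : v != 0 -> exists i, v i 0 != 0.
Proof.
move=> vn0; case/boolP: [exists i, v i 0 != 0] => [/existsP //|/existsPn H].
case/negP: vn0; apply/eqP/matrixP => i j; rewrite (ord1 j) mxE.
by have := H i; rewrite negbK => /eqP.
Qed.

Lemma schur_pd n (A B : 'M[R]_n) : pdmx A -> pdmx B -> pdmx (schur A B).
Proof.
move=> Ap Bp; have [L [Lp LL]] := sqrt_pd Ap.
have Lsym i j : L i j = L j i by rewrite -[in LHS]Lp.1 mxE.
split.
  apply/matrixP => i j; rewrite !mxE.
  by rewrite -[in RHS]Ap.1 -[in RHS]Bp.1 !mxE.
move=> v vn0.
pose w (l : 'I_n) : 'cV[R]_n := \col_i (v i 0 * L l i).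
have E : (v^T *m schur A B *m v) 0 0 = \sum_l ((w l)^T *m B *m w l) 0 0.
  under [RHS]eq_bigr do rewrite qfE.
  rewrite qfE; symmetry; rewrite exchange_big /=; apply: eq_bigr => i _.
  rewrite exchange_big /=; apply: eq_bigr => j _.
  rewrite !mxE -LL mxE mulr_suml mulr_sumr mulr_suml; apply: eq_bigr => l _.
  rewrite !mxE (Lsym i l); ring.
rewrite E.
have [i0 vi0] := cV_neq0 vn0.
have Aii : 0 < A i0 i0.
  have := Bp.2; have := Ap.2 _ (delta_neq0 i0); by rewrite qf_delta.
case/boolP: [exists l, L l i0 != 0] => [/existsP [l0 hl0] | /existsPn H]; last first.
  move: Aii; rewrite -LL mxE big1 ?ltxx // => l _.
  by have := H l; rewrite negbK Lsym => /eqP ->; rewrite mul0r.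
have wn0 : w l0 != 0.
  apply/negP => /eqP/matrixP/(_ i0 0); rewrite !mxE => /eqP.
  by rewrite mulf_eq0 (negPf vi0) (negPf hl0).
rewrite (bigD1 l0) //=; apply: ltr_pwDl; first exact: Bp.2.
by rewrite sumr_ge0 // => l _; exact: (pd_psd Bp).2.
Qed.

Lemma tr_pd_pd' n (P B : 'M[R]_n) : (0 < n)%N -> pdmx P -> pdmx B -> 0 < \tr (P *m B).
Proof. by case: n P B => // n P B _; exact: tr_pd_pd. Qed.

Lemma sum3 (I : finType) (f g h : I -> R) :
  \sum_i (f i - g i *+ 2 + h i) = \sum_i f i - (\sum_i g i) *+ 2 + \sum_i h i.
Proof. by rewrite big_split /= sumrB sumrMnl. Qed.

Lemma bernoulli (h : R) (m : nat) : 0 <= h -> 1 + m%:R * h <= (1 + h) ^+ m.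
Proof.
move=> h0; elim: m => [|m IH]; first by rewrite mul0r addr0 expr0.
rewrite exprSr.
have H1 : (1 + m%:R * h) * (1 + h) <= (1 + h) ^+ m * (1 + h).
  by rewrite ler_wpM2r // addr_ge0.
apply: le_trans H1.
have : 0 <= m%:R * h * h by rewrite !mulr_ge0.
rewrite -natr1; nra.
Qed.
End Spec.

Section Main.
Variable R : realType.
Variables (d r : nat) (C1 C2 : 'I_d -> 'M[R]_r).
Hypotheses (hC1 : forall i, pdmx (C1 i)) (hC2 : forall i, pdmx (C2 i)).

Local Notation Aop := (Aop C1 C2).
Local Notation Aadj := (Aadj C1 C2).
Local Notation Bm i j := (schur (C1 i) (C2 j)).

Lemma B_pd i j : pdmx (Bm i j).
Proof. exact: schur_pd. Qed.

Lemma Aadj_sym (y : 'M[R]_d) : (Aadj y)^T = Aadj y.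
Proof.
rewrite /Defs.Aadj raddf_sum; apply: eq_bigr => i _; rewrite raddf_sum.
apply: eq_bigr => j _; have Bs := (B_pd i j).1.
by rewrite -[in RHS]Bs; apply/matrixP => a b; rewrite !mxE.
Qed.

Lemma Aadj_psd (y : 'M[R]_d) : (forall i j, 0 <= y i j) -> psdmx (Aadj y).
Proof.
move=> y0; apply: psd_sum => i _; apply: psd_sum => j _.
by apply: psdZ => //; exact: pd_psd (B_pd i j).
Qed.

Lemma Aadj_pd (y : 'M[R]_d) (i0 : 'I_d) : (forall i j, 0 < y i j) -> pdmx (Aadj y).
Proof.
move=> y0; rewrite /Defs.Aadj (bigD1 i0) //= (bigD1 i0) //= -addrA.
apply: pdD; first by apply: pdZ => //; exact: B_pd.
apply: psdD.
  by apply: psd_sum => j _; apply: psdZ; [exact: ltW|exact: pd_psd (B_pd _ _)].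
apply: psd_sum => i _; apply: psd_sum => j _.
by apply: psdZ; [exact: ltW|exact: pd_psd (B_pd _ _)].
Qed.

Lemma trAadj (X : 'M[R]_r) (y : 'M[R]_d) : \tr (X *m Aadj y) = \sum_i \sum_j y i j * Aop X i j.
Proof.
rewrite /Defs.Aadj mulmx_sumr raddf_sum; apply: eq_bigr => i _.
rewrite mulmx_sumr raddf_sum; apply: eq_bigr => j _.
by rewrite /= -scalemxAr mxtraceZ mxE.
Qed.

Lemma AopZB s (X Y : 'M[R]_r) : Aop (s *: X - Y) = s *: Aop X - Aop Y.
Proof.
apply/matrixP => i j; rewrite !mxE /inner mulmxBl -scalemxAl.
by rewrite mxtraceD mxtraceZ raddfN.
Qed.

Lemma AadjZB s (y z : 'M[R]_d) : Aadj (s *: y - z) = s *: Aadj y - Aadj z.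
Proof.
rewrite /Defs.Aadj scaler_sumr -sumrB; apply: eq_bigr => i _.
rewrite scaler_sumr -sumrB; apply: eq_bigr => j _.
by rewrite !mxE scalerBl scalerA.
Qed.

Lemma Aop_ge0 (P : 'M[R]_r) i j : psdmx P -> 0 <= Aop P i j.
Proof. by move=> Pp; rewrite mxE; apply: tr_psd_pd => //; exact: B_pd. Qed.

Lemma Aop_gt0 (P : 'M[R]_r) i j : (0 < r)%N -> pdmx P -> 0 < Aop P i j.
Proof. by move=> r0 Pp; rewrite mxE; apply: tr_pd_pd' => //; exact: B_pd. Qed.

Lemma sqnorm2_exp (t : 'M[R]_d) (X : 'M[R]_r) :
  sqnorm2 (t - Aop X) = sqnorm2 t - (\tr (X *m Aadj t)) *+ 2 + sqnorm2 (Aop X).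
Proof.
rewrite trAadj /sqnorm2 -sum3; apply: eq_bigr => i _.
rewrite -sum3; apply: eq_bigr => j _; rewrite !mxE; ring.
Qed.

Definition Phi (X : 'M[R]_r) := Aadj (Aop X).

Lemma trPhi (X Y : 'M[R]_r) : \tr (X *m Phi Y) = \sum_i \sum_j Aop Y i j * Aop X i j.
Proof. exact: trAadj. Qed.

Lemma trPhi_sym (X Y : 'M[R]_r) : \tr (X *m Phi Y) = \tr (Y *m Phi X).
Proof.
rewrite !trPhi; apply: eq_bigr => i _; apply: eq_bigr => j _; exact: mulrC.
Qed.

Lemma trPhi_sq (X : 'M[R]_r) : \tr (X *m Phi X) = sqnorm2 (Aop X).
Proof.
rewrite trPhi; apply: eq_bigr => i _; apply: eq_bigr => j _; exact: esym (expr2 _).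
Qed.


Section Key.
Variables (W V : 'M[R]_r).
Hypotheses (hVW : V *m W = 1%:M) (hWV : W *m V = 1%:M) (hWs : W^T = W) (hVpd : pdmx V).

Definition ip (X Y : 'M[R]_r) := \tr (V *m X *m V *m Y).

Lemma ipW X Y : ip X (W *m Y *m W) = \tr (X *m Y).
Proof.
rewrite /ip !mulmxA -(mulmxA _ V W) hVW mulmx1 mxtrace_mulC !mulmxA hWV mul1mx //.
Qed.

Lemma ip_sym X Y : ip X Y = ip Y X.
Proof.
rewrite /ip mxtrace_mulC !mulmxA.
by rewrite mxtrace_mulC !mulmxA.
Qed.

Lemma ipDl X1 X2 Y : ip (X1 + X2) Y = ip X1 Y + ip X2 Y.
Proof. by rewrite /ip mulmxDr mulmxDl mulmxDl mxtraceD. Qed.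

Lemma ipZl a X Y : ip (a *: X) Y = a * ip X Y.
Proof. by rewrite /ip -scalemxAr -!scalemxAl mxtraceZ. Qed.

Lemma ip_ge0 X : X^T = X -> 0 <= ip X X.
Proof.
move=> Xs; have [L [Lp LL]] := sqrt_pd hVpd.
have -> : ip X X = \tr ((L *m X *m L) *m (L *m X *m L)).
  by rewrite /ip -LL !mulmxA [RHS]mxtrace_mulC !mulmxA.
set Y := L *m X *m L.
have Ys i j : Y i j = Y j i.
  have : Y^T = Y by rewrite /Y !trmx_mul Xs Lp.1 mulmxA.
  by move=> /matrixP /(_ j i); rewrite mxE.
rewrite /mxtrace sumr_ge0 // => i _; rewrite mxE sumr_ge0 // => k _.
by rewrite (Ys k i) -expr2 sqr_ge0.
Qed.

Lemma ip_exp X Y s :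
  ip (X + s *: Y) (X + s *: Y) = ip X X + s * ip X Y *+ 2 + s ^+ 2 * ip Y Y.
Proof.
have ipDr A B1 B2 : ip A (B1 + B2) = ip A B1 + ip A B2.
  by rewrite ip_sym ipDl !(ip_sym _ A).
have ipZr a A B1 : ip A (a *: B1) = a * ip A B1.
  by rewrite ip_sym ipZl ip_sym.
rewrite !ipDl !ipDr !ipZl !ipZr (ip_sym Y X); ring.
Qed.

Lemma ip_cs X Y : X^T = X -> Y^T = Y -> ip X Y ^+ 2 <= ip X X * ip Y Y.
Proof.
move=> Xs Ys; apply: cs0; first exact: ip_ge0.
move=> s; rewrite -ip_exp; apply: ip_ge0.
by rewrite linearD linearZ /= Xs Ys.
Qed.

Definition Tm (X : 'M[R]_r) := W *m Phi X *m W.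

Lemma ipT X Y : ip X (Tm Y) = \tr (X *m Phi Y).
Proof. exact: ipW. Qed.

Lemma ipT_adj X Y : ip (Tm X) Y = ip X (Tm Y).
Proof. by rewrite ip_sym !ipT trPhi_sym. Qed.

Lemma ip_iter j X Y : ip (iter j Tm X) Y = ip X (iter j Tm Y).
Proof.
elim: j X Y => [//|j IH] X Y.
by rewrite iterS ipT_adj IH -iterSr.
Qed.

Lemma Tm_sym X : (Tm X)^T = Tm X.
Proof. by rewrite /Tm !trmx_mul hWs Aadj_sym mulmxA. Qed.

Lemma iter_sym j X : X^T = X -> (iter j Tm X)^T = iter j Tm X.
Proof. by case: j => [//|j] _; rewrite iterS Tm_sym. Qed.

Lemma key_ineq X Bd : X^T = X -> (forall j, ip X (iter j.+1 Tm X) <= Bd) ->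
  sqnorm2 (Aop X) <= ip X X.
Proof.
move=> Xs HB.
pose m j := ip X (iter j Tm X).
have m1 : m 1%N = sqnorm2 (Aop X) by rewrite /m /= ipT trPhi_sq.
have a0 : 0 <= sqnorm2 (Aop X).
  by rewrite /sqnorm2 sumr_ge0 // => i _; rewrite sumr_ge0 // => j _; rewrite sqr_ge0.
set a := sqnorm2 (Aop X) in m1 a0 *.
set N := ip X X.
have N0 : 0 <= N by exact: ip_ge0.
have CS j : m j ^+ 2 <= N * m (j + j)%N.
  rewrite /m; have := ip_cs Xs (iter_sym j Xs).
  by rewrite ip_iter -iterD.
have [Nz|Npos] := eqVneq N 0.
  have := CS 1%N; rewrite Nz mul0r m1 => h.
  have : a ^+ 2 == 0 by rewrite eq_le h sqr_ge0.
  by rewrite sqrf_eq0 => /eqP ->.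
have Np : 0 < N by rewrite lt_def Npos N0.
pose rho := a / N.
have rho0 : 0 <= rho by rewrite divr_ge0.
have claim k : rho ^+ (2 ^ k) <= m (2 ^ k)%N / N.
  elim: k => [|k IH]; first by rewrite expn0 expr1 m1.
  rewrite expnS mul2n -addnn exprD -expr2.
  have h1 : (rho ^+ (2 ^ k)) ^+ 2 <= (m (2 ^ k)%N / N) ^+ 2.
    have g0 : 0 <= rho ^+ (2 ^ k) by rewrite exprn_ge0.
    rewrite ler_pXn2r ?nnegrE //; exact: le_trans g0 IH.
  apply: le_trans h1 _.
  have := CS (2 ^ k)%N; set u := m (2 ^ k)%N; set w := m _ => h.
  rewrite expr_div_n ler_pdivrMr ?exprn_gt0 //.
  have -> : w / N * N ^+ 2 = N * w by field; rewrite gt_eqF.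
  done.
have bnd k : rho ^+ (2 ^ k) <= Bd / N.
  apply: le_trans (claim k) _; rewrite ler_pM2r ?invr_gt0 //.
  by rewrite -(prednK (expn_gt0 2 k)); exact: HB.
have [rho1|rho1] := leP rho 1.
  by move: rho1; rewrite ler_pdivrMr // mul1r.
exfalso; pose h := rho - 1.
have hp : 0 < h by rewrite subr_gt0.
pose x := Bd / N / h.
pose k := Num.bound `|x|.
have kx : `|x| < k%:R by apply: archi_boundP.
have e1 : x <= k%:R * h / h.
  rewrite mulfK ?gt_eqF //; apply: le_trans (ltW kx); exact: ler_norm.
have e2 : Bd / N <= k%:R * h.
  by move: e1; rewrite /x ler_pM2r ?invr_gt0.
have e3 : k%:R * h <= (2 ^ k)%:R * h.
  by rewrite ler_pM2r // ler_nat ltnW // ltn_expl.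
have e4 : 1 + (2 ^ k)%:R * h <= rho ^+ (2 ^ k).
  have E : 1 + h = rho by rewrite /h addrC subrK.
  by have := bernoulli (2 ^ k) (ltW hp); rewrite E.
have e5 : (2 ^ k)%:R * h < 1 + (2 ^ k)%:R * h by rewrite ltrDr.
have := le_lt_trans (le_trans e2 e3) (lt_le_trans e5 (le_trans e4 (bnd k))).
by rewrite ltxx.
Qed.


Lemma Tm_psd P : psdmx P -> psdmx (Tm P).
Proof.
move=> Pp; apply: cong_psd hWs; apply: Aadj_psd => i j; exact: Aop_ge0.
Qed.

Lemma Tm_ZB s X Y : Tm (s *: X - Y) = s *: Tm X - Tm Y.
Proof.
by rewrite /Tm /Phi AopZB AadjZB mulmxBr mulmxBl -scalemxAr -scalemxAl.
Qed.

Lemma iter_bound X C0 s : psdmx X -> psdmx (s *: C0 - X) -> Tm C0 = C0 ->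
  forall j, psdmx (iter j Tm X) /\ psdmx (s *: C0 - iter j Tm X).
Proof.
move=> Xp XC TC; elim=> [//|j [IH1 IH2]]; rewrite iterS; split.
  exact: Tm_psd.
by rewrite -{1}TC -Tm_ZB; apply: Tm_psd.
Qed.

Lemma m_bound X C0 s : psdmx X -> psdmx (s *: C0 - X) -> Tm C0 = C0 ->
  forall j, ip X (iter j.+1 Tm X) <=
    \sum_i \sum_j (s * Aop C0 i j) * Aop X i j.
Proof.
move=> Xp XC TC j; rewrite iterS ipT trPhi.
have [_ H2] := iter_bound Xp XC TC j.
apply: ler_sum => i _; apply: ler_sum => k _.
rewrite ler_wpM2r //; first exact: Aop_ge0.
have := Aop_ge0 i k H2; rewrite AopZB !mxE subr_ge0 //.
Qed.

End Key.
End Main.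

Lemma le_sum_term (R : realType) (I : finType) (F : I -> R) j :
  (forall i, 0 <= F i) -> F j <= \sum_i F i.
Proof.
by move=> F0; rewrite (bigD1 j) //= lerDl sumr_ge0.
Qed.

Theorem mainTheorem6 (R : realType) (d r : nat)
    (T : 'I_d -> 'I_d -> 'I_d -> R)
    (hT : forall i1 i2 i3, 0 <= T i1 i2 i3)
    (C1 C2 : 'I_d -> 'M[R]_r)
    (hC1 : forall i, pdmx (C1 i)) (hC2 : forall i, pdmx (C2 i))
    (i3 : 'I_d) :
  let t : 'M[R]_d := \matrix_(i1, i2) T i1 i2 i3 in
  psdmx (Aadj C1 C2 t) /\
  forall Cold : 'M[R]_r, pdmx Cold ->
    let W := geomean (invmx (Aadj C1 C2 (Aop C1 C2 Cold))) Cold in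
    let Cnew := W *m Aadj C1 C2 t *m W in
    psdmx Cnew /\
    sqnorm2 (t - Aop C1 C2 Cnew) <= sqnorm2 (t - Aop C1 C2 Cold).
Proof.
move=> t.
have t0 i j : 0 <= t i j by rewrite mxE.
have Gp : psdmx (Aadj C1 C2 t) by apply: (Aadj_psd hC1 hC2).
split => // Cold Cp W Cnew.
case: (posnP r) => [r0|rpos].
  subst r; split.
    by split; [rewrite !flatmx0 | move=> v; rewrite mxE big_ord0].
  by rewrite /Cnew (flatmx0 (W *m _ *m W)) (flatmx0 Cold).
set K := Aadj C1 C2 (Aop C1 C2 Cold).
have Kp : pdmx K.
  by apply: (Aadj_pd hC1 hC2 i3) => i j; apply: (Aop_gt0 hC1 hC2).
have Pp := pd_inv Kp.
have [Chp ChCh] := sqrtmx_spec Pp.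
set Ch := sqrtmx (invmx K) in Chp ChCh.
have Chu : Ch \in unitmx.
  by have := pd_unit Pp; rewrite -ChCh unitmx_mul => /andP[].
have Cis : (invmx Ch)^T = invmx Ch by rewrite trmx_inv Chp.1.
have Mp : pdmx (invmx Ch *m Cold *m invmx Ch).
  by apply: cong_pd => //; rewrite unitmx_inv.
have [Sp SS] := sqrtmx_spec Mp.
set S := sqrtmx _ in Sp SS.
have Su : S \in unitmx.
  by have := pd_unit Mp; rewrite -SS unitmx_mul => /andP[].
have WE : W = Ch *m S *m Ch by [].
have Ws : W^T = W by rewrite WE !trmx_mul Chp.1 Sp.1 mulmxA.
have Wu : W \in unitmx by rewrite WE !unitmx_mul Chu Su.
have Wp : pdmx W.
  by apply: psd_unit_pd => //; rewrite WE; apply: cong_psd => //; exact: Chp.1.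
have ChK : Ch *m K *m Ch = 1%:M.
  have h : (Ch *m K *m Ch) *m Ch = 1%:M *m Ch.
    by rewrite -!mulmxA ChCh mulmxV ?(pd_unit Kp) // mulmx1 mul1mx.
  by have := congr1 (mulmx^~ (invmx Ch)) h; rewrite !mulmxK.
have WKW : W *m K *m W = Cold.
  rewrite WE -!mulmxA (mulmxA K) (mulmxA Ch (K *m Ch)) (mulmxA Ch K) ChK mul1mx.
  rewrite !mulmxA -(mulmxA _ S S) SS !mulmxA mulmxV // mul1mx -mulmxA mulVmx //.
  by rewrite mulmx1.
pose V := invmx W.
have Vp : pdmx V := pd_inv Wp.
have hVW : V *m W = 1%:M by rewrite mulVmx.
have hWV : W *m V = 1%:M by rewrite mulmxV.
have TC : Tm C1 C2 W Cold = Cold by rewrite /Tm /Phi -/K WKW.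
set G := Aadj C1 C2 t in Gp *.
have Cnp : psdmx Cnew by apply: cong_psd.
split => //.
pose c := Aop C1 C2 Cold.
have c0 i j : 0 < c i j by apply: (Aop_gt0 hC1 hC2).
pose s := \sum_i \sum_j t i j / c i j.
have sC : psdmx (s *: Cold - Cnew).
  have -> : s *: Cold - Cnew = W *m Aadj C1 C2 (s *: c - t) *m W.
    by rewrite (AadjZB C1 C2) -/K -/G mulmxBr mulmxBl -scalemxAr -scalemxAl WKW.
  apply: cong_psd => //; apply: (Aadj_psd hC1 hC2) => i j.
  have -> : (s *: c - t) i j = s * c i j - t i j by rewrite !mxE.
  rewrite subr_ge0 -ler_pdivrMr //.
  apply: (le_trans (@le_sum_term _ _ (fun k => t i k / c i k) j _)).
    by move=> k; rewrite divr_ge0 // ltW.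
  apply: (@le_sum_term _ _ (fun l => \sum_k t l k / c l k) i).
  by move=> l; apply: sumr_ge0 => k _; rewrite divr_ge0 // ltW.
have Cns : Cnew^T = Cnew := Cnp.1.
have key := key_ineq hC1 hC2 hVW hWV Ws Vp Cns (m_bound hC1 hC2 hVW hWV Ws Cnp sC TC).
rewrite !(sqnorm2_exp C1 C2) -/G.
have e1 : ip V Cnew Cnew = \tr (Cnew *m G) by rewrite [in LHS]/Cnew ipW.
have e2 : sqnorm2 (Aop C1 C2 Cold) = \tr (Cold *m K) by rewrite -trPhi_sq.
have e3 : ip V Cold Cold = \tr (Cold *m K) by rewrite -{2}WKW ipW.
have e4 : ip V Cold Cnew = \tr (Cold *m G) by rewrite /Cnew ipW.
have e5 := ip_ge0 Vp (_ : (Cold + (-1) *: Cnew)^T = Cold + (-1) *: Cnew).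
rewrite ip_exp e1 e3 e4 in e5.
have e6 : (Cold + (-1) *: Cnew)^T = Cold + (-1) *: Cnew.
  by rewrite linearD linearZ /= Cp.1 Cns.
move: (e5 e6) key; rewrite e1 e2; lra.
Qed.
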